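(* Let $F,G\in\mathcal{D}_0$ with $F \leftrightarrow (A,(x_j,p_j)_{j\in A})$ and $G\leftrightarrow (B,(y_j,q_j)_{j\in B})$. If $F\le_{\wedge\text{-disc}} G$, then $F\le_{wd} G$, i.e. $Q_X(\varepsilon)\ge Q_Y(\varepsilon)$ for all $\varepsilon>0$, where $X\sim F$, $Y\sim G$.
   Context: For a real random variable $X$, its Lévy concentration function is $Q_X(\varepsilon)=\sup_{x_0\in\mathbb{R}}\Pr\{X\in[x_0,x_0+\varepsilon]\}$, $\varepsilon>0$. For random variables $X,Y$ (or their distribution functions), write $X\le_{wd}Y$ if $Q_X(\varepsilon)\ge Q_Y(\varepsilon)$ for all $\varepsilon>0$. $\mathcal{D}_0$ is the set of discrete distributions $F$ on $\mathbb{R}$ whose support is order-isomorphic to a subset of $\mathbb{Z}$ with at least two elements. For $F\in\mathcal{D}_0$ there is a unique index set $A\in\{\mathbb{Z},\mathbb{N},-\mathbb{N}\}\cup\{\{1,\dots,n\}:n\ge 2\}$ order-isomorphic to $\operatorname{supp}(F)$ and a unique sequence $(x_j,p_j)_{j\in A}$ with $x_i<x_j$ for $i<j$, $p_j>0$, $\sum_{j\in A}p_j=1$, $\Pr(X=x_j)=p_j$ for $X\sim F$, where in the case $A=\mathbb{Z}$ the indexing is normalized by $\inf\{j\in\mathbb{Z}:\sum_{i\le j}p_i\ge 1/2\}=0$; this is written $F\leftrightarrow(A,(x_j,p_j)_{j\in A})$. Conventions: $x_a=-\infty$, $F(x_a)=0$ for $a<\min A$, and $x_a=+\infty$, $F(x_a)=1$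 for $a>\max A$ (when these exist); similarly for $G$. Let $A^\circ=A\setminus\{\min A\}$ (and $A^\circ=A$ if $A$ has no minimum), similarly $B^\circ$. For $a\in A,b\in B$ write $a\sim b$ iff $(F(x_{a-1}),F(x_a))\cap(G(y_{b-1}),G(y_b))\neq\emptyset$. For $a\in A^\circ,b\in B^\circ$ write $a\sim_\wedge b$ iff $a\sim b$ and $a-1\sim b-1$. Define $F\le_{\wedge\text{-disc}}G$ (''$G$ is at least as $\wedge$-discretely dispersed as $F$'') iff (i) $q_b\le p_a$ for all $(a,b)\in A\times B$ with $a\sim b$, and (ii) $x_a-x_{a-1}\le y_b-y_{b-1}$ for all $(a,b)\in A^\circ\times B^\circ$ with $a\sim_\wedge b$. *)

(* Defs.v *)
From HB Require Import structures.
From mathcomp Require Import all_boot all_order all_algebra.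
From mathcomp Require Import all_classical all_reals esum ereal.
Set Implicit Arguments. Unset Strict Implicit. Unset Printing Implicit Defensive.
Import Order.TTheory GRing.Theory Num.Theory.
Local Open Scope classical_set_scope.
Local Open Scope ring_scope.
Local Open Scope ereal_scope.

Section Disc.
Variable R : realType.

(* A discrete distribution in D_0, given by its index set A (a convex subset
   of int with >= 2 elements, hence order-isomorphic to Z, N, -N or {1..n}),
   strictly increasing atoms x_j and positive masses p_j summing to 1. *)
Definition Zconvex (A : set int) : Prop :=
  forall i j k : int, A i -> A k -> (i <= j)%R -> (j <= k)%R -> A j.

Definition inD0 (A : set int) (x p : int -> R) : Prop :=
  [/\ Zconvex A,
      (exists i j, [/\ A i, A j & i != j]),
      (forall i j, A i -> A j -> (i < j)%R -> (x i < x j)%R),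
      (forall j, A j -> (0 < p j)%R)
    & \esum_(j in A) (p j)%:E = 1].

(* F(x_a) = sum_{i in A, i <= a} p_i ; this gives F(x_a)=0 below min A and
   F(x_a)=1 above max A, matching the paper's conventions. *)
Definition cdf_at (A : set int) (p : int -> R) (a : int) : \bar R :=
  \esum_(i in [set i | A i /\ (i <= a)%R]) (p i)%:E.

Definition prob_interval (A : set int) (x p : int -> R) (x0 eps : R) : \bar R :=
  \esum_(j in [set j | A j /\ (x0 <= x j <= x0 + eps)%R]) (p j)%:E.

Definition Qconc (A : set int) (x p : int -> R) (eps : R) : \bar R :=
  ereal_sup (range (fun x0 : R => prob_interval A x p x0 eps)).

Definition le_wd (A : set int) (x p : int -> R) (B : set int) (y q : int -> R) : Prop :=
  forall eps : R, (0 < eps)%R -> Qconc B y q eps <= Qconc A x p eps.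

Definition sim (A : set int) (p : int -> R) (B : set int) (q : int -> R)
  (a b : int) : Prop :=
  exists t : R, [/\ cdf_at A p (a - 1)%R < t%:E, t%:E < cdf_at A p a,
                    cdf_at B q (b - 1)%R < t%:E & t%:E < cdf_at B q b].

(* F <=_{wedge-disc} G.  For convex A, a in A° iff a in A and a-1 in A. *)
Definition le_wedge_disc (A : set int) (x p : int -> R) (B : set int) (y q : int -> R) : Prop :=
  (forall a b, A a -> B b -> sim A p B q a b -> (q b <= p a)%R) /\
  (forall a b, A a -> A (a - 1)%R -> B b -> B (b - 1)%R ->
     sim A p B q a b -> sim A p B q (a - 1)%R (b - 1)%R ->
     (x a - x (a - 1) <= y b - y (b - 1))%R).

End Disc.

(* Main.v *)
Require Import Defs.
From HB Require Import structures.
From mathcomp Require Import all_boot all_order all_algebra.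
From mathcomp Require Import all_classical all_reals esum ereal.
From mathcomp Require Import lra zify.
Set Implicit Arguments. Unset Strict Implicit. Unset Printing Implicit Defensive.
Import Order.TTheory GRing.Theory Num.Theory.
Local Open Scope classical_set_scope.
Local Open Scope ring_scope.

Section Core.
Variable R : realType.
Variables (A B : set int) (x p y q F G : int -> R).
Hypothesis hAc : forall i j k : int, A i -> A k -> i <= j -> j <= k -> A j.
Hypothesis hBc : forall i j k : int, B i -> B k -> i <= j -> j <= k -> B j.
Hypothesis hy : forall i j, B i -> B j -> i < j -> y i < y j.
Hypothesis hp : forall j, A j -> 0 < p j.
Hypothesis hq : forall j, B j -> 0 < q j.
Hypothesis hFA : forall a, A a -> F a = F (a - 1) + p a.
Hypothesis hFn : forall a, ~ A a -> F a = F (a - 1).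
Hypothesis hGA : forall a, B a -> G a = G (a - 1) + q a.
Hypothesis hF01 : forall a, 0 <= F a <= 1.
Hypothesis hG01 : forall a, 0 <= G a <= 1.
Hypothesis hFup : forall a, F a < 1 -> exists i, A i /\ a < i.
Hypothesis hFdn : forall a, 0 < F a -> exists i, A i /\ i <= a.
Hypothesis hFlo : forall eps, 0 < eps -> exists a, F a < eps.
Hypothesis hFhi : forall eps, 0 < eps -> exists a, 1 - eps < F a.
Hypothesis hi : forall a c, A a -> B c -> F (a - 1) < G c -> G (c - 1) < F a ->
  G c - G (c - 1) <= F a - F (a - 1).
Hypothesis hii : forall a c, A a -> A (a - 1) -> B c -> B (c - 1) ->
  F (a - 1) < G c -> G (c - 1) < F a -> F (a - 1 - 1) < G (c - 1) ->
  G (c - 1 - 1) < F (a - 1) -> x a - x (a - 1) <= y c - y (c - 1).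

Lemma Fstep a : F (a - 1) <= F a.
Proof.
have [h|h] := pselect (A a); first by rewrite [F a](hFA h); have := hp h; lra.
by rewrite [F a](hFn h).
Qed.

Lemma Fmono a (n : nat) : F a <= F (a + n%:Z).
Proof.
elim: n => [|n IH]; first by rewrite addr0.
apply: (le_trans IH); have := Fstep (a + n.+1%:Z).
by have -> : a + n.+1%:Z - 1 = a + n%:Z by lia.
Qed.

Lemma Fle a b : a <= b -> F a <= F b.
Proof.
move=> ab; have -> : b = a + (absz (b - a))%:Z by lia.
exact: Fmono.
Qed.

Lemma FltA a : F (a - 1) < F a -> A a.
Proof.
move=> h; apply: contrapT => nA; move: h; rewrite [F a](hFn nA); lra.
Qed.

Lemma Anext e : A e -> F e < 1 -> A (e + 1).
Proof.
move=> Ae /hFup [i [Ai ei]]; apply: (hAc Ae Ai); lia.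
Qed.

Lemma Gstep c : B c -> G (c - 1) < G c.
Proof. by move=> Bc; rewrite (hGA Bc); have := hq Bc; lra. Qed.

Lemma nxt e c : A e -> B c -> G (c - 1) <= F e -> F e < G c ->
  A (e + 1) /\ G c - G (c - 1) <= F (e + 1) - F e.
Proof.
move=> Ae Bc h1 h2.
have Ae1 : A (e + 1) by apply: Anext => //; have := hG01 c; lra.
split => //.
have := hi Ae1 Bc; rewrite addrK; apply => //.
rewrite (hFA Ae1) addrK; have := hp Ae1; lra.
Qed.

Lemma hii1 e c : A (e + 1) -> A e -> B (c + 1) -> B c -> F e < G (c + 1) ->
  G c < F (e + 1) -> F (e - 1) < G c -> G (c - 1) < F e ->
  x (e + 1) - x e <= y (c + 1) - y c.
Proof. by move=> *; have := @hii (e + 1) (c + 1); rewrite !addrK; apply. Qed.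

Lemma search L (n : nat) a0 : F a0 <= L -> L < F (a0 + n%:Z) ->
  exists l, F (l - 1) <= L < F l.
Proof.
elim: n => [|n IH] h0 h1; first by move: h1; rewrite addr0; lra.
have [h|h] := leP (F (a0 + n%:Z)) L; last exact: IH.
exists (a0 + n.+1%:Z); have -> : a0 + n.+1%:Z - 1 = a0 + n%:Z by lia.
by rewrite h.
Qed.

Lemma lstart b : B b -> exists l, A l /\ F (l - 1) <= G (b - 1) < F l.
Proof.
move=> Bb; have /andP[L0 _] := hG01 (b - 1); set L := G (b - 1) in L0 *.
have LGb : L < G b by exact: Gstep.
have /andP[_ Gb1] := hG01 b.
have [a1 ha1] : exists a1, L < F a1.
  have pos : 0 < 1 - L by lra.
  have [a1 h] := hFhi pos.
  by exists a1; lra.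
have [a0 ha0] : exists a0, F a0 <= L.
  case: (pselect (exists a0, F a0 <= L)) => // hne; exfalso.
  have hall : forall a, L < F a.
    move=> a; rewrite ltNge; apply/negP => h; apply: hne; by exists a.
  set d := G b - L.
  have d0 : 0 < d by rewrite /d; lra.
  have pos : 0 < G b by lra.
  have [a0 ha0] := hFlo pos.
  have key : forall n : nat, n%:R * d <= F a0 - F (a0 - n%:Z).
    elim=> [|n IH]; first by rewrite subr0 mul0r; lra.
    set a := a0 - n%:Z.
    have Aa : A a.
      have pos1 : 0 < F (a - 1) by have := hall (a - 1); lra.
      have [i [Ai ia]] := hFdn pos1.
      have pos2 : F a0 < 1 by lra.
      have [j [Aj ja]] := hFup pos2.
      apply: (hAc Ai Aj); rewrite /a in ia *; clear -ia ja; lia.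
    have := hi Aa Bb; rewrite -/L => /(_ _ (hall a)).
    have : F (a - 1) <= F a0 by apply: Fle; rewrite /a; lia.
    have -> : a0 - n.+1%:Z = a - 1 by rewrite /a; lia.
    rewrite -/d => h1 h2.
    have {h2} h2 := h2 (le_lt_trans h1 ha0).
    rewrite -natr1 mulrDl mul1r; move: IH; rewrite -/a; lra.
  have := key (Num.Def.trunc (d^-1)).+1.
  have := truncnS_gt (d^-1).
  set N := (Num.Def.trunc (d^-1)).+1%:R => hN hk.
  have hNd : 1 < N * d.
    have := mulVf (lt0r_neq0 d0); nra.
  have := hF01 a0; have := hF01 (a0 - (Num.Def.trunc d^-1).+1%:Z); lra.
have a01 : a0 < a1.
  rewrite ltNge; apply/negP => h; have := Fle h; lra.
have e1 : L < F (a0 + (absz (a1 - a0))%:Z).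
  by have -> : a0 + (absz (a1 - a0))%:Z = a1 by lia.
have [l hl] := search ha0 e1.
exists l; split => //; apply: FltA; case/andP: hl => *; lra.
Qed.


Lemma Gstep1 c : B (c + 1) -> G c < G (c + 1).
Proof. by move=> /Gstep; rewrite addrK. Qed.

Lemma Fnext e : A (e + 1) -> F e < F (e + 1).
Proof. by move=> h; rewrite [F (e + 1)](hFA h) addrK; have := hp h; lra. Qed.

Lemma core_main b b' : B b -> B b' -> b <= b' -> exists s e,
  [/\ A s, A e, G b' - G (b - 1) <= F e - F (s - 1) & x e - x s <= y b' - y b].
Proof.
move=> Bb Bb' bb'.
have [l [Al /andP[hl1 hl2]]] := lstart Bb.
have inB : forall c, b <= c -> c <= b' -> B c := fun c h1 h2 => hBc Bb Bb' h1 h2.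
pose Final := exists s e,
  [/\ A s, A e, G b' - G (b - 1) <= F e - F (s - 1) & x e - x s <= y b' - y b].
pose St c := exists e, [/\ A e, F (e - 1) < G c, G c <= F e &
  (x e - x l <= y c - y b \/ [/\ c < b', G (c - 1) < F (e - 1), G c < F e,
    x e - x l <= y (c + 1) - y b &
    [/\ G c - G (b - 1) <= F e - F l, x e - x (l + 1) <= y c - y b & A (l + 1)]])].
have IH : forall k : nat, b + k%:Z <= b' -> St (b + k%:Z) \/ Final.
  elim => [|k IHk] hk.
    rewrite addr0 in hk *.
    have GbS := Gstep Bb.
    have [hlt|hge] := ltP (F l) (G b); last first.
      left; exists l; split => //; first lra.
      by left; rewrite !subrr.
    have [Al1 hq1] := nxt Al Bb (ltW hl2) hlt.
    have hF1 := Fnext Al1.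
    have := bb'; rewrite le_eqVlt => /orP[/eqP ebb|ltbb].
      right; exists (l + 1), (l + 1); split => //; rewrite ?addrK -?ebb; lra.
    have Bb1 : B (b + 1) by apply: inB; lia.
    have Gb1 := Gstep1 Bb1.
    have hx : x (l + 1) - x l <= y (b + 1) - y b.
      by apply: hii1 => //; lra.
    left; exists (l + 1); split => //; rewrite ?addrK; [lra|lra|].
    right; split => //; rewrite ?addrK; [lra|].
    by split => //; rewrite subrr subrr.
  have hk' : b + k%:Z <= b' by lia.
  case: (IHk hk') => [|]; last by right.
  have -> : b + k.+1%:Z = (b + k%:Z) + 1 by lia.
  move: hk; have -> : b + k.+1%:Z = (b + k%:Z) + 1 by lia.
  set c := b + k%:Z => hk [e [Ae he1 he2 hst]].
  have Bc : B c by apply: inB; rewrite /c in hk *; clear -hk; lia.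
  have Bc1 : B (c + 1) by apply: inB; rewrite /c in hk *; clear -hk; lia.
  have Gc1 := Gstep1 Bc1.
  have Gc0 := Gstep Bc.
  have yc1 : y c <= y (c + 1) by apply: ltW; apply: hy => //; lia.
  have [hge|hlt] := leP (G (c + 1)) (F e).
    left; exists e; split => //; first lra.
    by left; case: hst => [h|[_ _ _ h _]]; lra.
  have he2' : G (c + 1 - 1) <= F e by rewrite addrK.
  have [Ae1 hq1] := nxt Ae Bc1 he2' hlt.
  rewrite addrK in hq1.
  have hF1 := Fnext Ae1.
  have hx1 : x (e + 1) - x e <= y (c + 1) - y c.
    by apply: hii1 => //; lra.
  case: hst => [hfree|[cb' hu1 hu2 hu3 [hc1 hc2 Al1]]].
    left; exists (e + 1); split => //; rewrite ?addrK; [lra|lra|].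
    by left; lra.
  have := hk; rewrite le_eqVlt => /orP[/eqP ceq|clt].
    right; exists (l + 1), (e + 1); split => //; rewrite ?addrK -?ceq; lra.
  have Bc2 : B (c + 1 + 1) by apply: inB; rewrite /c in clt *; clear -clt; lia.
  have Gc2 := Gstep1 Bc2.
  have hx2 : x (e + 1) - x e <= y (c + 1 + 1) - y (c + 1).
    by apply: hii1 => //; rewrite ?addrK; lra.
  left; exists (e + 1); split => //; rewrite ?addrK; [lra|lra|].
  right; split => //; rewrite ?addrK; [lra|lra|].
  split => //; lra.
have := IH (absz (b' - b)).
have -> : b + (absz (b' - b))%:Z = b' by lia.
case => // [[e [Ae he1 he2 [hfree|[bad _ _ _ _]]]]]; last by rewrite ltxx in bad.
exists l, e; split => //; lra.
Qed.

End Core.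

Lemma seq_ub (s : seq int) : exists M, forall i, i \in s -> i <= M.
Proof.
elim: s => [|a s [M hM]]; first by exists 0.
exists (if a <= M then M else a); move=> i; rewrite inE => /orP[/eqP->|/hM hi];
  have [h|h] := leP a M; lia.
Qed.

Lemma seq_lb (s : seq int) : exists m, forall i, i \in s -> m <= i.
Proof.
elim: s => [|a s [M hM]]; first by exists 0.
exists (if a <= M then a else M); move=> i; rewrite inE => /orP[/eqP->|/hM hi];
  have [h|h] := leP a M; lia.
Qed.

Lemma seq_min (s : seq int) : s != [::] -> exists2 m, m \in s & forall i, i \in s -> m <= i.
Proof.
elim: s => [//|a s IH] _.
case: s IH => [|b s] IH.
  by exists a; rewrite ?inE // => i; rewrite inE => /eqP->.
have [//|m ms hm] := IH.
have [am|am] := leP a m.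
  exists a; first by rewrite inE eqxx.
  move=> i; rewrite inE => /orP[/eqP->//|/hm]; lia.
exists m; first by rewrite inE ms orbT.
move=> i; rewrite inE => /orP[/eqP->|/hm//]; lia.
Qed.

Lemma seq_max (s : seq int) : s != [::] -> exists2 m, m \in s & forall i, i \in s -> i <= m.
Proof.
elim: s => [//|a s IH] _.
case: s IH => [|b s] IH.
  by exists a; rewrite ?inE // => i; rewrite inE => /eqP->.
have [//|m ms hm] := IH.
have [am|am] := leP m a.
  exists a; first by rewrite inE eqxx.
  move=> i; rewrite inE => /orP[/eqP->//|/hm]; lia.
exists m; first by rewrite inE ms orbT.
move=> i; rewrite inE => /orP[/eqP->|/hm//]; lia.
Qed.

Lemma fin_bounds (X : set int) : finite_set X ->
  (exists M, forall i, X i -> i <= M) /\ (exists m, forall i, X i -> m <= i).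
Proof.
move=> /finite_fsetP [S ->]; split.
  have [M hM] := seq_ub (finmap.enum_fset S); exists M => i /= hi; exact: hM.
have [M hM] := seq_lb (finmap.enum_fset S); exists M => i /= hi; exact: hM.
Qed.

Lemma fin_minmax (X : set int) : finite_set X -> X !=set0 ->
  (exists2 m, X m & forall i, X i -> m <= i) /\ (exists2 m, X m & forall i, X i -> i <= m).
Proof.
move=> /finite_fsetP [S ->] [z /= zS].
have zS' : z \in finmap.enum_fset S := zS.
have sn : finmap.enum_fset S != [::] by apply/eqP => h; rewrite h in zS'.
split.
  have [m ms hm] := seq_min sn; exists m => //= i hi; exact: hm.
have [m ms hm] := seq_max sn; exists m => //= i hi; exact: hm.
Qed.

Section ELayer.
Variable R : realType.
Variables (A : set int) (x p : int -> R).
Hypothesis hpos : forall j, A j -> 0 < p j.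
Hypothesis hsum : (\esum_(j in A) (p j)%:E = 1)%E.

Definition Fr a : R := fine (cdf_at A p a).

Lemma pge0 i : A i -> (0 <= (p i)%:E)%E.
Proof. by move=> Ai; rewrite lee_fin ltW // hpos. Qed.

Lemma esum_sub (S T : set int) (f : int -> \bar R) : S `<=` T ->
  (forall i, T i -> 0 <= f i)%E -> (\esum_(i in S) f i <= \esum_(i in T) f i)%E.
Proof.
move=> ST f0; rewrite [X in (_ <= X)%E](esumID S) // setIidr //.
by apply: leeDl; apply: esum_ge0 => i [Ti _]; exact: f0.
Qed.

Lemma esumA_fin (S : set int) : S `<=` A ->
  [/\ (\esum_(i in S) (p i)%:E = (fine (\esum_(i in S) (p i)%:E))%:E)%E,
      0 <= fine (\esum_(i in S) (p i)%:E) & fine (\esum_(i in S) (p i)%:E) <= 1].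
Proof.
move=> SA.
have h0 : (0 <= \esum_(i in S) (p i)%:E)%E by apply: esum_ge0 => i /SA; exact: pge0.
have h1 : (\esum_(i in S) (p i)%:E <= 1)%E.
  by rewrite -hsum; apply: esum_sub => // i; exact: pge0.
have hf : \esum_(i in S) (p i)%:E \is a fin_num.
  by rewrite ge0_fin_numE // (le_lt_trans h1) // ltry.
by rewrite fineK //; split => //; rewrite -lee_fin fineK.
Qed.

Lemma cdfE a : cdf_at A p a = (Fr a)%:E.
Proof.
have SA : [set i | A i /\ (i <= a)%R] `<=` A by move=> i [].
by have [] := esumA_fin SA.
Qed.

Lemma Fr01 a : 0 <= Fr a <= 1.
Proof.
have SA : [set i | A i /\ (i <= a)%R] `<=` A by move=> i [].
by have [_ -> ->] := esumA_fin SA.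
Qed.

Lemma FrA a : A a -> Fr a = Fr (a - 1) + p a.
Proof.
move=> Aa; apply: EFin_inj; rewrite EFinD -!cdfE /cdf_at.
rewrite (esumID [set a]); last by move=> i [Ai _]; exact: pge0.
have -> : [set i | A i /\ i <= a] `&` [set a] = [set a].
  by apply/seteqP; split => i /=; [move=> [_ ->] | move=> ->; split].
have -> : [set i | A i /\ i <= a] `&` ~` [set a] = [set i | A i /\ i <= a - 1].
  apply/seteqP; split => i /=.
    by move=> [[Ai ia] ina]; split => //; lia.
  by move=> [Ai ia]; split; [split => //; lia | move=> h; move: ia; rewrite h; lia].
by rewrite esum_set1 ?pge0 // addeC.
Qed.

Lemma Frn a : ~ A a -> Fr a = Fr (a - 1).
Proof.
move=> nAa; apply: EFin_inj; rewrite -!cdfE /cdf_at.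
rewrite (esumID [set a]); last by move=> i [Ai _]; exact: pge0.
have -> : [set i | A i /\ i <= a] `&` [set a] = set0.
  by apply/seteqP; split => i //= [[Ai _] ia]; apply: nAa; rewrite -ia.
have -> : [set i | A i /\ i <= a] `&` ~` [set a] = [set i | A i /\ i <= a - 1].
  apply/seteqP; split => i /=.
    by move=> [[Ai ia] ina]; split => //; lia.
  by move=> [Ai ia]; split; [split => //; lia | move=> h; move: ia; rewrite h; lia].
by rewrite esum_set0 add0e.
Qed.

Lemma Frup a : Fr a < 1 -> exists i, A i /\ a < i.
Proof.
move=> h; case: (pselect (exists i, A i /\ a < i)) => // hne; exfalso.
have : Fr a = 1.
  apply: EFin_inj; rewrite -cdfE /cdf_at -hsum; congr esum.
  apply/seteqP; split => i /=; first by case.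
  move=> Ai; split => //; rewrite leNgt; apply/negP => ai; apply: hne; by exists i.
lra.
Qed.

Lemma Frdn a : 0 < Fr a -> exists i, A i /\ i <= a.
Proof.
move=> h; case: (pselect (exists i, A i /\ i <= a)) => // hne; exfalso.
have : Fr a = 0.
  apply: EFin_inj; rewrite -cdfE /cdf_at.
  have -> : [set i | A i /\ i <= a] = set0.
    by apply/seteqP; split => i //= [Ai ia]; apply: hne; exists i.
  by rewrite esum_set0.
lra.
Qed.

Lemma Frhi eps : 0 < eps -> exists a, 1 - eps < Fr a.
Proof.
move=> e0.
have : ((1 - eps)%:E < \esum_(j in A) (p j)%:E)%E by rewrite hsum lte_fin; lra.
rewrite /esum => /ereal_sup_gt [_ [X [finX XA] <-] hX].
have [[M hM] _] := fin_bounds finX.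
exists M; rewrite -lte_fin -cdfE; apply: (lt_le_trans hX); apply: esum_ge.
exists X => //; split => // i Xi; split; [exact: XA | exact: hM].
Qed.

Lemma Frlo eps : 0 < eps -> exists a, Fr a < eps.
Proof.
move=> e0.
have : ((1 - eps)%:E < \esum_(j in A) (p j)%:E)%E by rewrite hsum lte_fin; lra.
rewrite /esum => /ereal_sup_gt [_ [X [finX XA] <-] hX].
have [_ [m hm]] := fin_bounds finX.
exists (m - 1).
have hZ := esumID [set i | (i <= m - 1)%R] A (fun j => (p j)%:E) pge0.
have SA : A `&` ~` [set i | i <= m - 1] `<=` A by move=> i [].
have [Ze Z0 Z1] := esumA_fin SA.
have hXZ : (\sum_(i \in X) (p i)%:E <= \esum_(i in A `&` ~` [set i | (i <= m - 1)%R]) (p i)%:E)%E.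
  apply: esum_ge; exists X => //; split => // i Xi; split; first exact: XA.
  by move=> /= h; have := hm _ Xi; lia.
have hc : cdf_at A p (m - 1) = \esum_(i in A `&` [set i | i <= m - 1]) (p i)%:E by [].
rewrite -hc cdfE Ze hsum in hZ.
rewrite -EFinD in hZ; have hZ2 := congr1 fine hZ; rewrite /= in hZ2.
have := lt_le_trans hX hXZ; rewrite Ze lte_fin => hh; lra.
Qed.

Lemma mid_esum (s e : int) : s - 1 <= e ->
  (\esum_(i in [set i | A i /\ (s <= i)%R /\ (i <= e)%R]) (p i)%:E = (Fr e - Fr (s - 1))%:E)%E.
Proof.
move=> se.
have h : cdf_at A p e = (cdf_at A p (s - 1) +
    \esum_(i in [set i | A i /\ (s <= i)%R /\ (i <= e)%R]) (p i)%:E)%E.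
  rewrite /cdf_at (esumID [set i | i <= s - 1]); last by move=> i [Ai _]; exact: pge0.
  have -> : [set i | A i /\ i <= e] `&` [set i | i <= s - 1] = [set i | A i /\ i <= s - 1].
    apply/seteqP; split => i /=.
    - by move=> [[Ai ie] hs]; split => //; lia.
    - by move=> [Ai hs]; split; [split => //; lia | lia].
  have -> : [set i | A i /\ i <= e] `&` ~` [set i | i <= s - 1] = [set i | A i /\ s <= i /\ i <= e].
    apply/seteqP; split => i /=.
    - by move=> [[Ai ie] hs]; split => //; split; lia.
    - by move=> [Ai [si ie]]; split; [split => // | lia].
  by [].
have SA : [set i | A i /\ s <= i /\ i <= e] `<=` A by move=> i [].
have [Ze _ _] := esumA_fin SA.
rewrite Ze !cdfE -EFinD in h; have h2 := congr1 fine h; rewrite /= in h2.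
by rewrite Ze; congr EFin; lra.
Qed.

End ELayer.

Lemma mid_ex (R : realType) (u1 u2 v1 v2 : R) : u1 < v2 -> v1 < u2 -> u1 < u2 -> v1 < v2 ->
  exists t, [/\ u1 < t, t < u2, v1 < t & t < v2].
Proof.
move=> h1 h2 h3 h4.
have [a1|a1] := leP u1 v1; have [a2|a2] := leP u2 v2.
- by exists ((v1 + u2) / 2); split; lra.
- by exists ((v1 + v2) / 2); split; lra.
- by exists ((u1 + u2) / 2); split; lra.
- by exists ((u1 + v2) / 2); split; lra.
Qed.

Lemma simI (R : realType) (A B : set int) (p q : int -> R)
  (hp : forall j, A j -> 0 < p j) (hs : (\esum_(j in A) (p j)%:E = 1)%E)
  (hq : forall j, B j -> 0 < q j) (hs' : (\esum_(j in B) (q j)%:E = 1)%E) a c :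
  Fr A p (a - 1) < Fr B q c -> Fr B q (c - 1) < Fr A p a ->
  Fr A p (a - 1) < Fr A p a -> Fr B q (c - 1) < Fr B q c -> sim A p B q a c.
Proof.
move=> h1 h2 h3 h4; have [t [t1 t2 t3 t4]] := mid_ex h1 h2 h3 h4.
by exists t; rewrite !(cdfE hp hs) !(cdfE hq hs') !lte_fin.
Qed.

Lemma prob_lb (R : realType) (A : set int) (x p : int -> R)
  (hp : forall j, A j -> 0 < p j) (hs : (\esum_(j in A) (p j)%:E = 1)%E)
  (hx : forall i j, A i -> A j -> i < j -> x i < x j) s e eps :
  A s -> A e -> x e - x s <= eps ->
  ((Fr A p e - Fr A p (s - 1))%:E <= prob_interval A x p (x s) eps)%E.
Proof.
move=> As Ae hse.
have pos : forall i, A i -> (0 <= (p i)%:E)%E by move=> i Ai; rewrite lee_fin ltW // hp.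
have [es|se] := ltP e s.
  apply: (@le_trans _ _ 0%E); last by apply: esum_ge0 => i [Ai _]; exact: pos.
  rewrite lee_fin subr_le0; apply: (Fle hp (FrA hp hs) (Frn hp hs)).
  by clear -es; lia.
have se' : s - 1 <= e by clear -se; lia.
rewrite -(mid_esum hp hs se'); apply: esum_sub => [i [Ai [si ie]]|i [Ai _]]; last exact: pos.
have hxs : x s <= x i.
  have [->|lt] : s = i \/ s < i by clear -si; lia.
    by [].
  exact/ltW/hx.
have hxe : x i <= x e.
  have [->|lt] : i = e \/ i < e by clear -ie; lia.
    by [].
  exact/ltW/hx.
split => //; apply/andP; split; lra.
Qed.

Unset Implicit Arguments.

Theorem theorem4p1 (R : realType) (A : set int) (x p : int -> R)
  (B : set int) (y q : int -> R) :
  inD0 A x p -> inD0 B y q ->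
  le_wedge_disc A x p B y q -> le_wd A x p B y q.
Proof.
move=> [Aconv _ hx Ap Asum] [Bconv _ hy Bq Bsum] [hwi hwii] eps eps0.
have hFA := FrA Ap Asum; have hFn := Frn Ap Asum; have hGA := FrA Bq Bsum.
have hF01 := Fr01 Ap Asum; have hG01 := Fr01 Bq Bsum.
have hFup := Frup Ap Asum; have hFdn := Frdn Ap Asum.
have hFlo := Frlo Ap Asum; have hFhi := Frhi Ap Asum.
have FAs : forall a, A a -> Fr A p (a - 1) < Fr A p a.
  by move=> a Aa; rewrite [Fr A p a](hFA _ Aa); have := Ap _ Aa; lra.
have GBs : forall c, B c -> Fr B q (c - 1) < Fr B q c.
  by move=> c Bc; rewrite [Fr B q c](hGA _ Bc); have := Bq _ Bc; lra.
have hi : forall a c, A a -> B c -> Fr A p (a - 1) < Fr B q c ->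
    Fr B q (c - 1) < Fr A p a ->
    Fr B q c - Fr B q (c - 1) <= Fr A p a - Fr A p (a - 1).
  move=> a c Aa Bc h1 h2.
  have := hwi a c Aa Bc (simI Ap Asum Bq Bsum h1 h2 (FAs _ Aa) (GBs _ Bc)).
  rewrite [Fr A p a](hFA _ Aa) [Fr B q c](hGA _ Bc); lra.
have hii : forall a c, A a -> A (a - 1) -> B c -> B (c - 1) ->
    Fr A p (a - 1) < Fr B q c -> Fr B q (c - 1) < Fr A p a ->
    Fr A p (a - 1 - 1) < Fr B q (c - 1) -> Fr B q (c - 1 - 1) < Fr A p (a - 1) ->
    x a - x (a - 1) <= y c - y (c - 1).
  move=> a c Aa Aa1 Bc Bc1 h1 h2 h3 h4.
  apply: hwii => //.
    exact: (simI Ap Asum Bq Bsum h1 h2 (FAs _ Aa) (GBs _ Bc)).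
  exact: (simI Ap Asum Bq Bsum h3 h4 (FAs _ Aa1) (GBs _ Bc1)).
have core := core_main Aconv Bconv hy Ap Bq hFA hFn hGA hF01 hG01 hFup hFdn hFlo hFhi hi hii.
have pos : forall i, A i -> (0 <= (p i)%:E)%E by move=> i Ai; rewrite lee_fin ltW // Ap.
have QA0 : forall x0, (prob_interval A x p x0 eps <= Qconc A x p eps)%E.
  by move=> x0; apply: ereal_sup_ubound; exists x0.
rewrite /Qconc; apply: ge_ereal_sup => _ [y0 _ <-].
rewrite /prob_interval /esum; apply: ge_ereal_sup => _ [X [finX XJ] <-].
case: (pselect (X !=set0)) => [Xn0|X0]; last first.
  have -> : X = set0 by apply/seteqP; split => i // Xi; apply: X0; exists i.
  rewrite fsbig_set0; apply: le_trans (QA0 0); apply: esum_ge0 => j [Aj _]; exact: pos.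
have [[b Xb hb] [b' Xb' hb']] := fin_minmax finX Xn0.
have [Bb /andP[hb1 hb2]] := XJ _ Xb.
have [Bb' /andP[hb1' hb2']] := XJ _ Xb'.
have bb' : b <= b' := hb _ Xb'.
have [s [e [As Ae hm hsp]]] := core b b' Bb Bb' bb'.
have bb'1 : b - 1 <= b' by clear -bb'; lia.
apply: (@le_trans _ _ (\esum_(i in [set i | B i /\ (b <= i)%R /\ (i <= b')%R]) (q i)%:E)%E).
  apply: esum_ge; exists X => //; split => // i Xi; split; first by case: (XJ _ Xi).
  by split; [exact: hb | exact: hb'].
rewrite (mid_esum Bq Bsum bb'1).
apply: (@le_trans _ _ (Fr A p e - Fr A p (s - 1))%:E); first by rewrite lee_fin.
apply: le_trans (QA0 (x s)); apply: prob_lb => //; lra.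
Qed.
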